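(* Let $p=(z_0,\tau_0,0)\in\mathcal{C}$. Then $\mathcal{H}(p)\cap\mathcal{C}=\{p\}$ if and only if $\tau_0=0$ (i.e. $p\in\mathcal{E}$), and in that case $\mathcal{H}(p)$ is tangent to $\mathcal{C}$ at $p$ (the derivative $dY/dz$ along $\mathcal{H}(p)$ vanishes at $z=z_0$). If $\tau_0\neq 0$, then $\mathcal{H}(p)\cap\mathcal{C}$ consists of exactly two points, namely $p$ and the point with $z$-coordinate $z_1=-\dfrac{\tau_0(1+z_0^2)-z_0}{\tau_0z_0(1+z_0^2)+1}$ (interpreted at $z=\infty$ if the denominator vanishes), and $\mathcal{H}(p)$ crosses $\mathcal{C}$ transversally at $p$, with $dY/dz=-2c\tau_0(1+z_0^2)/[1+(b_1-1)z_0^2]$ there.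
   Context: Fix real constants $a_1,a_2,a_3,a_4$ and $b_1>1$, and put $c=a_3-a_2$, assumed $>0$. Flux $F=(f,g)$, $f(u,v)=(b_1+1)u^2/2+v^2/2+a_1u+a_2v$, $g(u,v)=uv+a_3u+a_4v$. Coordinates $(z,\tau,Y)\in\mathbb{R}^3$. Define $\widetilde U(z,\tau)=\frac{2cz}{z^2+1}+c\tau(z^2-1)$, $V_1(z,\tau)=\frac{c}{z^2+1}+c\tau z$, $U=(\widetilde U-a_1+a_4)/b_1$, $V=V_1-a_3$. The point $(z,\tau,Y)$ has left state $W=(U+zY/2,\,V+Y/2)$ and right state $W'=(U-zY/2,\,V-Y/2)$. For $p\in\mathbb{R}^3$, $\mathcal{H}(p)=\{q: W(q)=W(p)\}$; it is the graph over $z\in\mathbb{R}$ of a smooth map $z\mapsto(\tau(z),Y(z))$. The characteristic plane is $\mathcal{C}=\{Y=0\}$ and the coincidence curve is $\mathcal{E}=\{Y=0,\tau=0\}$. *)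

(* Defs.v *)
From Stdlib Require Import Reals.
From Coquelicot Require Import Coquelicot.
Open Scope R_scope.

Definition pz (q : R * R * R) : R := fst (fst q).
Definition ptau (q : R * R * R) : R := snd (fst q).
Definition pY (q : R * R * R) : R := snd q.

Section Model.
Variables (a1 a2 a3 a4 b1 : R).

Definition cc : R := a3 - a2.

Definition Utilde (z tau : R) : R := 2 * cc * z / (z ^ 2 + 1) + cc * tau * (z ^ 2 - 1).
Definition V1 (z tau : R) : R := cc / (z ^ 2 + 1) + cc * tau * z.
Definition UU (z tau : R) : R := (Utilde z tau - a1 + a4) / b1.
Definition VV (z tau : R) : R := V1 z tau - a3.

Definition Wl (q : R * R * R) : R * R :=
  (UU (pz q) (ptau q) + pz q * pY q / 2, VV (pz q) (ptau q) + pY q / 2).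

Definition inH (p q : R * R * R) : Prop := Wl q = Wl p.

Definition inC (q : R * R * R) : Prop := pY q = 0.

Definition Hgraph (p : R * R * R) (tauf Yf : R -> R) : Prop :=
  forall z tau Y, inH p (z, tau, Y) <-> (tau = tauf z /\ Y = Yf z).

End Model.

(* Main.v *)
Require Import Defs.
From Stdlib Require Import Reals Lra Psatz.
From Coquelicot Require Import Coquelicot.
Open Scope R_scope.

Definition Ef b1 z := (b1-1)*z^2+1.
Definition U0 c z0 t0 := 2*c*z0/(z0^2+1) + c*t0*(z0^2-1).
Definition V0 c z0 t0 := c/(z0^2+1) + c*t0*z0.
Definition tf b1 c z0 t0 z := (c*(2-b1)*z/(z^2+1) - U0 c z0 t0 + b1*z*V0 c z0 t0)/(c*Ef b1 z).
Definition Df z0 t0 := t0*z0*(1+z0^2)+1.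
Definition af z0 t0 := 2*z0 + t0*(z0^4-1).
Definition Qf z0 t0 z := Df z0 t0*z^2 - af z0 t0*z + (1+z0^2) - Df z0 t0.
Definition Yf b1 c z0 t0 z := -2*c*Qf z0 t0 z/((1+z0^2)*Ef b1 z).

Lemma Ef_pos b1 z : 1 < b1 -> 0 < Ef b1 z.
Proof. intros; unfold Ef; nra. Qed.

Lemma sq1_pos z : 0 < z^2+1.
Proof. nra. Qed.

Lemma Yf_id b1 c z0 t0 z : 1 < b1 -> 0 < c ->
  Yf b1 c z0 t0 z = 2*(V0 c z0 t0 - (c/(z^2+1) + c*tf b1 c z0 t0 z*z)).
Proof.
  intros hb hc. pose proof (Ef_pos b1 z hb). pose proof (sq1_pos z). pose proof (sq1_pos z0).
  unfold Yf, tf, Qf, Df, af, U0, V0. unfold Ef in *. field. repeat split; try lra.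
Qed.

Lemma tf_z0 b1 c z0 t0 : 1 < b1 -> 0 < c -> tf b1 c z0 t0 z0 = t0.
Proof.
  intros hb hc. pose proof (Ef_pos b1 z0 hb). pose proof (sq1_pos z0).
  unfold tf, U0, V0. unfold Ef in *. field. lra.
Qed.

Lemma graph a1 a2 a3 a4 b1 z0 t0 : 1 < b1 -> 0 < a3 - a2 ->
  Hgraph a1 a2 a3 a4 b1 (z0,t0,0) (tf b1 (a3-a2) z0 t0) (Yf b1 (a3-a2) z0 t0).
Proof.
  intros hb hc z tau Y.
  pose proof (Ef_pos b1 z hb). pose proof (sq1_pos z). pose proof (sq1_pos z0).
  rewrite Yf_id by lra.
  unfold inH, Wl, UU, VV, Utilde, V1, cc, pz, ptau, pY; cbn [fst snd].
  split.
  - intro h. injection h as e1 e2.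
    assert (E1 : z*(z*1) = z^2) by ring. assert (E0: z0*(z0*1)=z0^2) by ring.
    rewrite ?E1, ?E0 in e1, e2.
    assert (hY : Y = 2 * (V0 (a3-a2) z0 t0 - ((a3-a2) / (z ^ 2 + 1) + (a3-a2) * tau * z)))
      .
    { unfold V0. clear -e2. lra. }
    assert (ht : tau = tf b1 (a3-a2) z0 t0 z).
    2:{ split; [exact ht|]. rewrite <- ht. exact hY. }
    rewrite hY in e1. clear e2.
    set (c := a3 - a2) in *.
    assert (K : b1 * ((2 * c * z / (z ^ 2 + 1) + c * tau * (z ^ 2 - 1) - a1 + a4) / b1 +
      z * (2 * (V0 c z0 t0 - (c / (z ^ 2 + 1) + c * tau * z))) / 2 -
      ((2 * c * z0 / (z0 ^ 2 + 1) + c * t0 * (z0 ^ 2 - 1) - a1 + a4) / b1 + z0 * 0 / 2))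
      = c * (2 - b1) * z / (z ^ 2 + 1) - U0 c z0 t0 + b1 * z * V0 c z0 t0 - c * Ef b1 z * tau).
    { unfold U0, Ef. field. lra. }
    rewrite e1, Rminus_diag, Rmult_0_r in K.
    unfold tf. assert (hcE : c * Ef b1 z <> 0) by nra.
    apply Rmult_eq_reg_r with (c*Ef b1 z); [|exact hcE].
    match goal with |- _ = ?N / ?D * _ => replace (N/D * D) with N by (field; repeat split; lra) end.
    lra.
  - intros [-> ->]. set (c := a3 - a2) in *.
    f_equal.
    + unfold tf, U0, V0, Ef in *. field. repeat split; lra.
    + unfold V0. field. lra.
Qed.

Lemma Yf_deriv b1 c z0 t0 : 1 < b1 -> 0 < c ->
  is_derive (Yf b1 c z0 t0) z0 (- 2 * c * t0 * (1 + z0 ^ 2) / (1 + (b1 - 1) * z0 ^ 2)).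
Proof.
  intros hb hc. pose proof (Ef_pos b1 z0 hb). pose proof (sq1_pos z0).
  unfold Yf, Qf, Ef in *. auto_derive.
  - nra.
  - unfold Df, af. field. lra.
Qed.

Definition hf b1 c z0 t0 w :=
  -2*c*(Df z0 t0 - af z0 t0 * w + (1+z0^2-Df z0 t0)*w^2)/((1+z0^2)*((b1-1)+w^2)).

Lemma hf_cont b1 c z0 t0 : 1 < b1 -> is_lim (hf b1 c z0 t0) 0 (hf b1 c z0 t0 0).
Proof.
  intros hb. apply is_lim_continuity.
  apply continuity_pt_filterlim.
  assert (D : ex_derive (hf b1 c z0 t0) 0).
  { unfold hf. auto_derive. pose proof (sq1_pos z0). nra. }
  exact (ex_derive_continuous _ _ D).
Qed.

Lemma Yf_hf b1 c z0 t0 z : 1 < b1 -> z <> 0 -> hf b1 c z0 t0 (/z) = Yf b1 c z0 t0 z.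
Proof.
  intros hb hz. pose proof (Ef_pos b1 z hb). pose proof (sq1_pos z0).
  unfold hf, Yf, Qf, Ef in *. field. repeat split; try lra; try nra.
Qed.

Lemma Yf_lim b1 c z0 t0 : 1 < b1 ->
  is_lim (Yf b1 c z0 t0) p_infty (-2*c*Df z0 t0/((1+z0^2)*(b1-1))) /\
  is_lim (Yf b1 c z0 t0) m_infty (-2*c*Df z0 t0/((1+z0^2)*(b1-1))).
Proof.
  intros hb. pose proof (sq1_pos z0).
  replace (-2*c*Df z0 t0/((1+z0^2)*(b1-1))) with (hf b1 c z0 t0 0)
    by (unfold hf; field; lra).
  split.
  - apply is_lim_ext_loc with (fun z => hf b1 c z0 t0 (/z)).
    { exists 0. intros y hy. apply Yf_hf; lra. }
    apply (is_lim_comp _ _ p_infty _ 0).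
    + apply hf_cont; exact hb.
    + apply (is_lim_inv (fun y => y) p_infty p_infty); [apply is_lim_id| discriminate].
    + exists 0. intros y hy h0. injection h0. apply Rinv_neq_0_compat. lra.
  - apply is_lim_ext_loc with (fun z => hf b1 c z0 t0 (/z)).
    { exists 0. intros y hy. apply Yf_hf; lra. }
    apply (is_lim_comp _ _ m_infty _ 0).
    + apply hf_cont; exact hb.
    + apply (is_lim_inv (fun y => y) m_infty m_infty); [apply is_lim_id| discriminate].
    + exists 0. intros y hy h0. injection h0. apply Rinv_neq_0_compat. lra.
Qed.

Lemma div_neq0 x y : x <> 0 -> y <> 0 -> x / y <> 0.
Proof. intros; unfold Rdiv; apply Rmult_integral_contrapositive_currified; auto; apply Rinv_neq_0_compat; auto. Qed.

Lemma HC_char a1 a2 a3 a4 b1 z0 t0 z t Y : 1 < b1 -> 0 < a3 - a2 ->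
  (inH a1 a2 a3 a4 b1 (z0,t0,0) (z,t,Y) /\ inC (z,t,Y)) <->
  (t = tf b1 (a3-a2) z0 t0 z /\ Y = 0 /\ Qf z0 t0 z = 0).
Proof.
  intros hb hc. rewrite (graph a1 a2 a3 a4 b1 z0 t0 hb hc z t Y).
  unfold inC, pY; cbn [snd].
  pose proof (Ef_pos b1 z hb). pose proof (sq1_pos z0).
  assert (key : Yf b1 (a3-a2) z0 t0 z = 0 <-> Qf z0 t0 z = 0).
  { unfold Yf. split; intro h.
    - apply Rmult_eq_reg_l with (-2*(a3-a2)/((1+z0^2)*Ef b1 z)).
      + rewrite Rmult_0_r. rewrite <- h. field. nra.
      + apply div_neq0; nra.
    - rewrite h. field. nra. }
  split.
  - intros [[h1 h2] h3]. subst Y. repeat split; auto. apply key; auto.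
  - intros [h1 [h2 h3]]. repeat split; auto. subst Y. symmetry. apply key; auto.
Qed.

Theorem mainTheorem2 (a1 a2 a3 a4 b1 : R) (hb1 : 1 < b1) (hc : 0 < a3 - a2)
  (z0 tau0 : R) :
  let c := a3 - a2 in
  let p := (z0, tau0, 0) in
  let HC := fun q => inH a1 a2 a3 a4 b1 p q /\ inC q in
  let D := tau0 * z0 * (1 + z0 ^ 2) + 1 in
  let z1 := - (tau0 * (1 + z0 ^ 2) - z0) / D in
  (tau0 = 0 ->
     (forall q, HC q <-> q = p) /\
     exists tauf Yf, Hgraph a1 a2 a3 a4 b1 p tauf Yf /\ is_derive Yf z0 0 /\
       ~ is_lim Yf p_infty 0)
  /\
  (tau0 <> 0 ->
     (D <> 0 ->
        exists tau1, (z1, tau1, 0) <> p /\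
          forall q, HC q <-> (q = p \/ q = (z1, tau1, 0)))
     /\
     (D = 0 ->
        (forall q, HC q <-> q = p) /\
        forall tauf Yf, Hgraph a1 a2 a3 a4 b1 p tauf Yf ->
          is_lim Yf p_infty 0 /\ is_lim Yf m_infty 0)
     /\
     exists tauf Yf, Hgraph a1 a2 a3 a4 b1 p tauf Yf /\
       is_derive Yf z0 (- 2 * c * tau0 * (1 + z0 ^ 2) / (1 + (b1 - 1) * z0 ^ 2)) /\
       - 2 * c * tau0 * (1 + z0 ^ 2) / (1 + (b1 - 1) * z0 ^ 2) <> 0).
Proof.
  intros c p HC D z1.
  pose proof (sq1_pos z0) as hz0.
  assert (hE0 : 0 < 1 + (b1-1)*z0^2) by nra.
  assert (Hg := graph a1 a2 a3 a4 b1 z0 tau0 hb1 hc).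
  assert (Hd := Yf_deriv b1 c z0 tau0 hb1 hc).
  assert (Hl := Yf_lim b1 c z0 tau0 hb1).
  assert (htz := tf_z0 b1 c z0 tau0 hb1 hc).
  assert (Qz0 : Qf z0 tau0 z0 = 0) by (unfold Qf, Df, af; ring).
  split.
  - intros ht0.
    split.
    + intros [[z t] Y]. unfold HC, p. rewrite HC_char by assumption.
      assert (hQ : Qf z0 tau0 z = (z - z0)^2) by (unfold Qf, Df, af; rewrite ht0; ring).
      split.
      * intros [h1 [h2 h3]]. rewrite hQ in h3.
        assert (z = z0) by nra. subst z Y. fold c in h1. rewrite h1, htz. reflexivity.
      * intro h. injection h as -> -> ->. fold c. repeat split; auto.
    + exists (tf b1 c z0 tau0), (Yf b1 c z0 tau0). split; [exact Hg|]. split.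
      * replace 0 with (- 2 * c * tau0 * (1 + z0 ^ 2) / (1 + (b1 - 1) * z0 ^ 2))
          by (rewrite ht0; field; lra). exact Hd.
      * intro hl. destruct Hl as [Hl _].
        apply is_lim_unique in hl. apply is_lim_unique in Hl. rewrite hl in Hl.
        injection Hl. unfold Df. rewrite ht0.
        intro h. symmetry in h. revert h. apply div_neq0; [|nra].
        unfold c; nra.
  - intros ht0.
    split; [|split].
    + intros hD.
      exists (tf b1 c z0 tau0 z1). split.
      * intro h. injection h as h1 h2.
        assert (D * (z1 - z0) = - tau0 * (1 + z0^2)^2) by (unfold z1, D in *; field; exact hD).
        rewrite h1 in H. assert (tau0 * (1+z0^2)^2 = 0) by lra.
        apply Rmult_integral in H0. destruct H0 as [H0|H0]; [lra| nra].
      * intros [[z t] Y]. unfold HC, p. rewrite HC_char by assumption.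
        assert (hQ : Qf z0 tau0 z = D * (z - z0) * (z - z1))
          by (unfold Qf, Df, af, z1, D in *; field; exact hD).
        rewrite hQ. fold c. split.
        -- intros [h1 [h2 h3]]. subst Y t.
           apply Rmult_integral in h3. destruct h3 as [h3|h3].
           ++ apply Rmult_integral in h3. destruct h3 as [h3|h3]; [contradiction|].
              left. replace z with z0 by lra. rewrite htz. reflexivity.
           ++ right. replace z with z1 by lra. reflexivity.
        -- intros [h|h]; injection h as -> -> ->; repeat split; auto;
             try (rewrite htz; reflexivity); try ring.
    + intros hD. split.
      * intros [[z t] Y]. unfold HC, p. rewrite HC_char by assumption.
        assert (ha : af z0 tau0 * z0 = 1 + z0^2).
        { unfold Qf in Qz0. fold D in Qz0. unfold Df in Qz0. fold D in Qz0. rewrite hD in Qz0. lra. }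
        assert (hQ : Qf z0 tau0 z = - af z0 tau0 * (z - z0)).
        { unfold Qf. unfold Df. fold D. rewrite hD. lra. }
        rewrite hQ. fold c. split.
        -- intros [h1 [h2 h3]]. subst Y t.
           assert (af z0 tau0 <> 0) by (intro h; rewrite h in ha; lra).
           assert (z = z0).
           { apply Rmult_integral in h3. destruct h3 as [h3|h3]; [|lra].
             exfalso. apply H. lra. }
           subst z. rewrite htz. reflexivity.
        -- intro h. injection h as -> -> ->. repeat split; auto. ring.
      * intros tauf Yf' Hg'.
        assert (ext : forall z, Yf b1 c z0 tau0 z = Yf' z).
        { intro z. apply (Hg' z (tf b1 c z0 tau0 z) (Yf b1 c z0 tau0 z)). apply Hg. auto. }
        replace (Finite 0) with (Finite (-2*c*Df z0 tau0/((1+z0^2)*(b1-1)))).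
        2:{ f_equal. unfold Df. fold D. rewrite hD. field. lra. }
        destruct Hl as [Hp Hm].
        split; [apply (is_lim_ext _ _ _ _ ext Hp) | apply (is_lim_ext _ _ _ _ ext Hm)].
    + exists (tf b1 c z0 tau0), (Yf b1 c z0 tau0). split; [exact Hg|]. split; [exact Hd|].
      apply div_neq0; [|lra].
      assert (0 < c) by (unfold c; lra).
      intro h. assert (c * tau0 * (1+z0^2) = 0) by lra.
      apply Rmult_integral in H0. destruct H0 as [H0|H0]; [|lra].
      apply Rmult_integral in H0. destruct H0; lra.
Qed.
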